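(* Let $p>\alpha+2>0$, assume $6p^2-11p+4\ge0$ and $p\neq\tfrac13$, and suppose $$\frac{6p^3-29p^2+17p-2-2p\sqrt{6p^2-11p+4}}{(3p-1)^2}\le\alpha\le\frac{6p^3-29p^2+17p-2+2p\sqrt{6p^2-11p+4}}{(3p-1)^2}.$$ Then $F_{p,\alpha}(r)\le 0$ for all $r\in(0,1]$, where $$F_{p,\alpha}(r)=r^{\,p-4-\frac{3\alpha}{2}}\int_0^{\frac{2r}{1+r}}\frac{t^{\frac{\alpha+2}{p}-1}}{(1-t)^{\frac{\alpha+2}{p}}}\,dt-\int_0^1\frac{t^{\frac{\alpha+2}{p}-1}}{(1-t)^{\frac{\alpha+2}{p}}}\,dt .$$
   Context: For $p>\alpha+2>0$ the integral $\int_0^1 t^{\frac{\alpha+2}{p}-1}(1-t)^{-\frac{\alpha+2}{p}}\,dt$ equals $B\!\left(\frac{\alpha+2}{p},1-\frac{\alpha+2}{p}\right)=\pi/\sin\frac{(\alpha+2)\pi}{p}$, so $F_{p,\alpha}$ is well defined on $(0,1]$. *)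

(* Defs.v *)
From HB Require Import structures.
From mathcomp Require Import all_boot all_order all_algebra.
From mathcomp Require Import all_classical all_reals all_analysis.
Set Implicit Arguments. Unset Strict Implicit. Unset Printing Implicit Defensive.
Import Order.TTheory GRing.Theory Num.Theory.
Local Open Scope classical_set_scope.
Local Open Scope ring_scope.

Definition integrand {R : realType} (p alpha : R) (t : R) : R :=
  t `^ ((alpha + 2) / p - 1) / (1 - t) `^ ((alpha + 2) / p).

(* \int_0^x integrand dt  (Lebesgue integral over ]0, x[, possibly improper
   in the Riemann sense; the integrand is nonnegative and integrable here) *)
Definition Iint {R : realType} (p alpha x : R) : R :=
  Rintegral (@lebesgue_measure R) `]0, x[ (integrand p alpha).

Definition F {R : realType} (p alpha r : R) : R :=
  r `^ (p - 4 - 3 * alpha / 2) * Iint p alpha (2 * r / (1 + r))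
  - Iint p alpha 1.

(* Main.v *)
Require Import Defs.
From HB Require Import structures.
From mathcomp Require Import all_boot all_order all_algebra.
From mathcomp Require Import all_classical all_reals all_analysis.
From mathcomp Require Import measurable_realfun.
From mathcomp Require Import lra ring.
Import Order.TTheory GRing.Theory Num.Theory.
Import numFieldNormedType.Exports.
Local Open Scope classical_set_scope.
Local Open Scope ring_scope.
Set Implicit Arguments. Unset Strict Implicit. Unset Printing Implicit Defensive.



Definition Lf {R : realType} (a c : R) (w : R) : R :=
  - c * ln w + a * ln (1 - w) + ln (1 + w).

Lemma Lf_derive (R : realType) (a c w : R) : 0 < w < 1 ->
  is_derive w 1 (Lf a c) (- c * w^-1 + a * ((1 - w)^-1 * (-1)) + (1 + w)^-1 * 1).
Proof.
move=> /andP[w0 w1].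
have h1 : is_derive w 1 (fun x : R => 1 - x) (-1).
  have h : is_derive w 1 (cst (1:R) - id) (0 - 1).
    exact: is_deriveB.
  rewrite sub0r in h; exact: h.
have h2 : is_derive w 1 (fun x : R => 1 + x) 1.
  have h : is_derive w 1 (cst (1:R) + id) (0 + 1).
    exact: is_deriveD.
  rewrite add0r in h; exact: h.
have l1 : is_derive w 1 (@ln R) w^-1 by apply: is_derive1_ln.
have l2 : is_derive w 1 (fun x => ln (1 - x)) ((1 - w)^-1 * (-1)).
  apply: (@is_derive1_comp _ (@ln R) (fun x => 1 - x)) => //.
  by apply: is_derive1_ln; lra.
have l3 : is_derive w 1 (fun x => ln (1 + x)) ((1 + w)^-1 * 1).
  apply: (@is_derive1_comp _ (@ln R) (fun x => 1 + x)) => //.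
  by apply: is_derive1_ln; lra.
rewrite /Lf.
apply: is_deriveD.
Qed.

Lemma Lf_mono (R : realType) (a c : R) :
  (forall w, 0 < w < 1 -> 0 <= c + (a - 1) * w + (1 + a - c) * w ^+ 2) ->
  forall v u, 0 < v -> v <= u -> u < 1 -> Lf a c u <= Lf a c v.
Proof.
move=> hq v u v0 vu u1.
have [->|vu'] := eqVneq v u; first by [].
have ltvu : v < u by rewrite lt_neqAle vu' vu.
pose df w := - c * w^-1 + a * ((1 - w)^-1 * (-1)) + (1 + w)^-1 * 1.
have hd : forall x, x \in `]v, u[ -> is_derive x 1 (Lf a c) (df x).
  move=> x; rewrite in_itv /= => /andP[vx xu].
  apply: Lf_derive; apply/andP; split; lra.
have hc : {within `[v, u]%classic, continuous (Lf a c)}.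
  apply: derivable_within_continuous => x; rewrite in_itv /= => /andP[vx xu].
  have : is_derive x 1 (Lf a c) (df x) by apply: Lf_derive; apply/andP; split; lra.
  by case.
have [x /[!in_itv] /= /andP[vx xu] E] := MVT ltvu hd hc.
rewrite -subr_le0 E.
have x0 : 0 < x by lra.
have x1 : x < 1 by lra.
have hx := hq x (introT andP (conj x0 x1)).
have -> : df x = - (c + (a - 1) * x + (1 + a - c) * x ^+ 2) / (x * (1 - x) * (1 + x)).
  rewrite /df; field.
  apply/and3P; split; apply: lt0r_neq0 => //; lra.
rewrite mulr_le0_ge0 // ?subr_ge0 //.
rewrite mulNr oppr_le0 divr_ge0 // mulr_ge0 // ?mulr_ge0 //; lra.
Qed.

Definition fa {R : realType} (a t : R) : R := t `^ (a - 1) / (1 - t) `^ a.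
Definition phi {R : realType} (r t : R) : R := 2 * t / (2 * r + (1 - r) * t).
Definition dphi {R : realType} (r t : R) : R := 4 * r / (2 * r + (1 - r) * t) ^+ 2.

Lemma le_by_diff (R : realType) (X Y P Q : R) : Y - X = Q - P -> P <= Q -> X <= Y.
Proof. by move=> E; rewrite -subr_ge0 -E subr_ge0. Qed.

Lemma ln_m (R : realType) (x y : R) : 0 < x -> 0 < y -> ln (x * y) = ln x + ln y.
Proof. by move=> x0 y0; rewrite lnM ?posrE. Qed.

Lemma ln_d (R : realType) (x y : R) : 0 < x -> 0 < y -> ln (x / y) = ln x - ln y.
Proof. by move=> x0 y0; rewrite ln_div ?posrE. Qed.

Lemma fa_gt0 (R : realType) (a t : R) : 0 < t < 1 -> 0 < fa a t.
Proof.
move=> /andP[t0 t1]; rewrite /fa divr_gt0 // powR_gt0 //; lra.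
Qed.

Lemma ln_fa (R : realType) (a t : R) : 0 < t < 1 ->
  ln (fa a t) = (a - 1) * ln t - a * ln (1 - t).
Proof.
move=> /andP[t0 t1]; rewrite /fa ln_div ?posrE ?powR_gt0 //; last lra.
by rewrite !ln_powR.
Qed.

Lemma pointwise (R : realType) (a k r t : R) : 0 < a < 1 ->
  (forall w, 0 < w < 1 -> 0 <= (k + a) + (a - 1) * w + (1 + a - (k + a)) * w ^+ 2) ->
  0 < r <= 1 -> 0 < t -> t * (1 + r) < 2 * r ->
  r `^ k * fa a t <= fa a (phi r t) * dphi r t.
Proof.
move=> /andP[a0 a1] hq /andP[r0 r1] t0 tr.
have t1 : t < 1 by nra.
set v := t / (2 - t).
set u := v / r.
have v0 : 0 < v by rewrite divr_gt0 //; lra.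
have vr : v < r by rewrite ltr_pdivrMr; [nra|lra].
have u0 : 0 < u by rewrite divr_gt0.
have u1 : u < 1 by rewrite ltr_pdivrMr // mul1r.
have vu : v <= u by rewrite ler_pdivlMr // ler_piMr // ltW.
have v1 : v < 1 by lra.
have ht : t = 2 * v / (1 + v) by rewrite /v; field; apply/andP; split; apply: lt0r_neq0; lra.
have ht1 : 1 - t = (1 - v) / (1 + v) by rewrite /v; field; apply/andP; split; apply: lt0r_neq0; lra.
have hr : r = v / u by rewrite /u; field; apply/andP; split; apply: lt0r_neq0; lra.
have Dpos : 0 < 2 * r + (1 - r) * t by nra.
have hD : 2 * r + (1 - r) * t = 2 * r * (1 + u) / (1 + v).
  rewrite /u /v; field; apply/and3P; split; apply: lt0r_neq0; lra.
clearbody u v.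
have hp : phi r t = 2 * u / (1 + u).
  rewrite /phi hD {1}ht hr; field.
  by repeat (apply/andP; split); apply: lt0r_neq0; lra.
have hp1 : 1 - phi r t = (1 - u) / (1 + u).
  rewrite hp; field; apply: lt0r_neq0; lra.
have hdp : dphi r t = 4 * r / (2 * r + (1 - r) * t) ^+ 2 by [].
have p0 : 0 < phi r t < 1.
  by rewrite hp; apply/andP; split; [rewrite divr_gt0 //; lra | rewrite ltr_pdivrMr; lra].
have tt : 0 < t < 1 by apply/andP; split.
rewrite -ler_ln ?posrE; last 2 first.
- by apply: mulr_gt0; [rewrite powR_gt0 | rewrite fa_gt0].
- apply: mulr_gt0; first by rewrite fa_gt0.
  by rewrite /dphi divr_gt0 ?exprn_gt0 //; apply: mulr_gt0.
have dp : 0 < dphi r t by rewrite /dphi divr_gt0 ?exprn_gt0 //; apply: mulr_gt0.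
rewrite ln_m ?powR_gt0 ?fa_gt0 // ln_m ?fa_gt0 //.
rewrite !ln_fa // ln_powR /dphi ln_d ?exprn_gt0 //; last by apply: mulr_gt0.
rewrite lnXn // ln_m //.
have e4 : ln (4 : R) = ln 2 *+ 2.
  by rewrite -lnXn // expr2; congr ln; rewrite -natrM.
have eD : ln (2 * r + (1 - r) * t) = ln 2 + ln r + ln (1 + u) - ln (1 + v).
  rewrite hD ln_d; [|apply: mulr_gt0; [apply: mulr_gt0|]|]; try lra.
  rewrite !ln_m //; lra.
have et : ln t = ln 2 + ln v - ln (1 + v).
  rewrite ht ln_d ?ln_m //; lra.
have et1 : ln (1 - t) = ln (1 - v) - ln (1 + v).
  rewrite ht1 ln_d //; lra.
have ep : ln (phi r t) = ln 2 + ln u - ln (1 + u).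
  rewrite hp ln_d ?ln_m //; lra.
have ep1 : ln (1 - phi r t) = ln (1 - u) - ln (1 + u).
  rewrite hp1 ln_d //; lra.
have er : ln r = ln v - ln u.
  by rewrite hr ln_d.
apply: (@le_by_diff _ _ _ (Lf a (k + a) u) (Lf a (k + a) v)); last first.
  by apply: Lf_mono.
rewrite e4 eD et et1 ep ep1 er /Lf.
ring.
Qed.



Lemma deriv_cont (R : realType) (f : R -> R) (x df : R) :
  is_derive x 1 f df -> {for x, continuous f}.
Proof.
by case=> d _; apply/differentiable_continuous/derivable1_diffP.
Qed.

Lemma is_derive_powR1m (R : realType) (b t : R) : t < 1 ->
  is_derive t 1 (fun x => (1 - x) `^ b) (b * (1 - t) `^ (b - 1) * (-1)).
Proof.
move=> t1.
have h : is_derive t 1 (cst (1:R) - id) (0 - 1) by exact: is_deriveB.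
rewrite sub0r in h.
have h' : is_derive t 1 (fun x : R => 1 - x) (-1) := h.
have hp : is_derive (1 - t) 1 (@powR R ^~ b) (b * (1 - t) `^ (b - 1)).
  by apply: is_derive1_powR; lra.
exact: (@is_derive1_comp R (@powR R ^~ b) (fun x => 1 - x) t _ _ hp h').
Qed.

Lemma fa_derivable (R : realType) (a t : R) : 0 < t < 1 ->
  exists df, is_derive t 1 (fa a) df.
Proof.
move=> /andP[t0 t1].
have h1 := is_derive1_powR (a - 1) t0.
have h2 := is_derive_powR1m a t1.
have nz : (1 - t) `^ a != 0 by rewrite gt_eqF // powR_gt0 //; lra.
have h3 := @is_deriveV R (fun x => (1 - x) `^ a) t _ 1 nz h2.
eexists.
rewrite /fa.
apply: (is_deriveM h1 h3).
Qed.

Lemma fa_cont (R : realType) (a : R) : {in `]0, 1[, continuous (fa a)}.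
Proof.
move=> t; rewrite in_itv /= => tt.
by have [df h] := fa_derivable a tt; exact: deriv_cont h.
Qed.

Lemma mfun01 (R : realType) (g : R -> R) : {in `]0, 1[, continuous g} ->
  forall al be : R, 0 < al -> be < 1 -> measurable_fun `[al, be] (EFin \o g).
Proof.
move=> cg al be al0 be1.
have mg : measurable_fun (`]0, 1[%classic : set R) g.
  apply: open_continuous_measurable_fun => // x; rewrite inE /= => xi; exact: cg.
apply/measurable_EFinP; apply: measurable_funS mg => //.
by move=> x /=; rewrite !in_itv /= => /andP[h1 h2]; apply/andP; split; lra.
Qed.

Lemma bound_oo (R : realType) (g : R -> R) (A B : R) (M : \bar R) :
  A < B -> {in `]A, B[, continuous g} -> (forall x, A < x < B -> 0 <= g x) ->
  (forall al be, A < al -> al < be -> be < B ->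
     (\int[lebesgue_measure]_(x in `[al, be]) (g x)%:E <= M)%E) ->
  (\int[lebesgue_measure]_(x in `]A, B[) (g x)%:E <= M)%E.
Proof.
move=> AB cg g0 hb.
pose d := B - A.
have d0 : 0 < d by rewrite /d subr_gt0.
pose e (n : nat) : R := d / (n + 3)%:R.
have n3 n : (3:R) <= (n + 3)%:R by rewrite (ler_nat R 3) leq_addl.
have e0 n : 0 < e n by rewrite /e divr_gt0 //; have := n3 n; lra.
have e2 n : e n * 2 < d.
  rewrite /e mulrAC ltr_pdivrMr; last by have := n3 n; lra.
  have := n3 n; nra.
have emon n m : (n <= m)%N -> e m <= e n.
  move=> nm; rewrite /e ler_pM2l // lef_pV2 ?posrE; first last.
  - by have := n3 n; lra.
  - by have := n3 m; lra.
  by rewrite ler_nat leq_add2r.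
pose S n := `[A + e n, B - e n]%classic.
have SAB n : S n `<=` `]A, B[%classic.
  move=> x; rewrite /S /= !in_itv /= => /andP[h1 h2].
  have en := e0 n; apply/andP; split; lra.
have mg : measurable_fun `]A, B[ g.
  apply: measurable_realfun.open_continuous_measurable_fun => // x; rewrite inE /= => xi; exact: cg.
have nd : nondecreasing_seq S.
  apply/nondecreasing_seqP => n; rewrite subsetEset => x.
  rewrite /S /= !in_itv /= => /andP[h1 h2].
  have en := emon n n.+1 (leqnSn n); apply/andP; split; lra.
have U : \bigcup_n S n = `]A, B[%classic.
  apply/seteqP; split; first by move=> x [n _]; apply: SAB.
  move=> x; rewrite /= in_itv /= => /andP[h1 h2].
  pose m := Num.min (x - A) (B - x).
  have m0 : 0 < m by rewrite /m lt_min; apply/andP; split; lra.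
  pose N := Num.truncn (d / m).
  have hN : d / m < N.+1%:R by have /andP[] := truncn_itv (ltW (divr_gt0 d0 m0)).
  exists N => //.
  have : e N < m.
    rewrite /e ltr_pdivrMr ?ltr0n ?addn3 // mulrC -ltr_pdivrMr //.
    apply: (lt_le_trans hN); rewrite ler_nat; exact: (leq_trans (leqnSn _) (leqnSn _)).
  rewrite /S /= in_itv /= /m lt_min => /andP[h3 h4].
  apply/andP; split; lra.
have mEg : measurable_fun `]A, B[%classic (EFin \o g).
  by apply/measurable_realfun.measurable_EFinP.
have cv := @ge0_nondecreasing_set_cvg_integral _ (measurableTypeR R) R S (EFin \o g) (@lebesgue_measure R) nd
  (fun i => measurable_itv _) (fun i => measurable_funS (measurable_itv _) (SAB i) mEg)
  (fun i x Sx => g0 x (SAB i x Sx)).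
rewrite -U -(cvg_lim _ cv) //.
apply: lime_le; first by apply/cvg_ex; eexists; exact: cv.
apply: nearW => n /=.
apply: hb; have := e0 n; have := e2 n; rewrite /d; lra.
Qed.

Definition hb {R : realType} (a t : R) : R := 2 * t `^ (a - 1) + 2 * (1 - t) `^ (- a).
Definition Hb {R : realType} (a t : R) : R :=
  (2 / a) * t `^ a - (2 / (1 - a)) * (1 - t) `^ (1 - a).

Lemma Hb_derive (R : realType) (a t : R) : 0 < a < 1 -> 0 < t < 1 ->
  is_derive t 1 (Hb a) (hb a t).
Proof.
move=> /andP[a0 a1] /andP[t0 t1].
have d1 := is_deriveZ (2 / a) (is_derive1_powR a t0).
have d2 := is_deriveZ (2 / (1 - a)) (is_derive_powR1m (1 - a) t1).
have d3 := is_deriveB d1 d2.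
have E : (2 / a) *: (a * t `^ (a - 1)) -
          (2 / (1 - a)) *: ((1 - a) * (1 - t) `^ (1 - a - 1) * -1) = hb a t.
  rewrite /hb /GRing.scale /=.
  have -> : 1 - a - 1 = - a by ring.
  field; apply/andP; split; apply: lt0r_neq0; lra.
rewrite -E; exact: d3.
Qed.

Lemma hb_derivable (R : realType) (a t : R) : 0 < t < 1 ->
  exists df, is_derive t 1 (hb a) df.
Proof.
move=> /andP[t0 t1].
have d1 := is_deriveZ 2 (is_derive1_powR (a - 1) t0).
have d2 := is_deriveZ 2 (is_derive_powR1m (- a) t1).
eexists; exact: (is_deriveD d1 d2).
Qed.

Lemma hb_cont (R : realType) (a : R) : {in `]0, 1[, continuous (hb a)}.
Proof.
move=> t; rewrite in_itv /= => tt.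
by have [df h] := hb_derivable a tt; exact: deriv_cont h.
Qed.

Lemma powR_le1 (R : realType) (x e : R) : 0 <= x <= 1 -> 0 <= e -> x `^ e <= 1.
Proof.
move=> /andP[x0 x1] e0.
have := @ge0_ler_powR R e e0 x 1; rewrite powR1 => -> //; rewrite nnegrE //.
Qed.

Lemma fa_le_hb (R : realType) (a t : R) : 0 < a < 1 -> 0 < t < 1 -> fa a t <= hb a t.
Proof.
move=> /andP[a0 a1] /andP[t0 t1].
rewrite /fa /hb powRN.
have p1 : 0 < t `^ (a - 1) by rewrite powR_gt0.
have p2 : 0 < (1 - t) `^ a by rewrite powR_gt0 //; lra.
set z := ((1 - t) `^ a)^-1.
have z0 : 0 < z by rewrite invr_gt0.
have yz : (1 - t) `^ a * z = 1 by rewrite mulfV // gt_eqF.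
have [th|th] := leP t (2^-1).
- have : 2^-1 <= (1 - t) `^ a.
    apply: (@le_trans _ _ ((2^-1) `^ a)).
      by apply: ger1_powR; [apply/andP; split; lra | lra].
    by apply: ge0_ler_powR; rewrite ?nnegrE; lra.
  move=> h.
  have : z <= 2 by nra.
  nra.
- have e : t `^ (a - 1) = t `^ a / t.
    by rewrite powRB ?powRr1 ?(ltW t0) //; apply/implyP => _; rewrite gt_eqF.
  have ta : t `^ a <= 1 by apply: powR_le1; lra.
  have ti : t * t^-1 = 1 by rewrite mulfV // gt_eqF.
  have : t `^ (a - 1) <= 2.
    rewrite e; have : 0 <= t`^a by apply: powR_ge0.
    have : 0 < t^-1 by rewrite invr_gt0.
    nra.
  nra.
Qed.

Lemma int_hb (R : realType) (a al be : R) : 0 < a < 1 -> 0 < al -> al < be -> be < 1 ->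
  (\int[lebesgue_measure]_(x in `[al, be]) (hb a x)%:E = (Hb a be)%:E - (Hb a al)%:E)%E.
Proof.
move=> aa al0 albe be1.
have dH (x : R) : 0 < x < 1 -> is_derive x 1 (Hb a) (hb a x) by move=> xx; exact: Hb_derive.
apply: continuous_FTC2 => //.
- apply: derivable_within_continuous => x; rewrite in_itv /= => /andP[h1 h2].
  have [df d] := hb_derivable a (introT andP (conj (lt_le_trans al0 h1) (le_lt_trans h2 be1))).
  by case: d.
- split.
  + move=> x; rewrite in_itv /= => /andP[h1 h2].
    by case: (dH x (introT andP (conj (lt_trans al0 h1) (lt_trans h2 be1)))).
  + apply: cvg_at_right_filter.
    exact: (deriv_cont (dH al (introT andP (conj al0 (lt_trans albe be1))))).
  + apply: cvg_at_left_filter.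
    exact: (deriv_cont (dH be (introT andP (conj (lt_trans al0 albe) be1)))).
- move=> x; rewrite in_itv /= => /andP[h1 h2].
  have := dH x (introT andP (conj (lt_trans al0 h1) (lt_trans h2 be1))).
  by move=> d; rewrite derive1E derive_val.
Qed.

Lemma Hb_bound (R : realType) (a al be : R) : 0 < a < 1 -> 0 < al -> al < be -> be < 1 ->
  Hb a be - Hb a al <= 2 / a + 2 / (1 - a).
Proof.
move=> /andP[a0 a1] al0 albe be1.
rewrite /Hb.
have h1 : be `^ a <= 1 by apply: powR_le1; lra.
have h2 : 0 <= (1 - be) `^ (1 - a) by apply: powR_ge0.
have h3 : (1 - al) `^ (1 - a) <= 1 by apply: powR_le1; lra.
have h4 : 0 <= al `^ a by apply: powR_ge0.
have c1 : 0 < 2 / a by rewrite divr_gt0.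
have c2 : 0 < 2 / (1 - a) by rewrite divr_gt0 //; lra.
nra.
Qed.

Lemma fa_fin (R : realType) (a : R) : 0 < a < 1 ->
  (\int[lebesgue_measure]_(x in `]0%R, 1%R[) (fa a x)%:E <= (2 / a + 2 / (1 - a))%:E)%E.
Proof.
move=> aa.
apply: bound_oo => //.
- exact: fa_cont.
- by move=> x xx; apply/ltW/fa_gt0.
move=> al be al0 albe be1.
apply: (@le_trans _ _ (\int[lebesgue_measure]_(x in `[al, be]) (hb a x)%:E)%E).
  apply: ge0_le_integral => //.
  - by move=> x /=; rewrite in_itv /= => /andP[h1 h2]; rewrite lee_fin ltW // fa_gt0 //; apply/andP; split; lra.
  - exact: mfun01 (@fa_cont R a) _ _ al0 be1.
  - exact: mfun01 (@hb_cont R a) _ _ al0 be1.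
  - move=> x /=; rewrite in_itv /= => /andP[h1 h2]; rewrite lee_fin fa_le_hb //.
    by apply/andP; split; lra.
rewrite int_hb // -EFinB lee_fin.
exact: Hb_bound.
Qed.


Lemma alg_part (R : realType) (p alpha : R) :
  alpha + 2 < p -> 0 < alpha + 2 ->
  0 <= 6 * p ^+ 2 - 11 * p + 4 ->
  p != 3^-1 ->
  (6 * p ^+ 3 - 29 * p ^+ 2 + 17 * p - 2
     - 2 * p * Num.sqrt (6 * p ^+ 2 - 11 * p + 4)) / (3 * p - 1) ^+ 2 <= alpha ->
  alpha <= (6 * p ^+ 3 - 29 * p ^+ 2 + 17 * p - 2
     + 2 * p * Num.sqrt (6 * p ^+ 2 - 11 * p + 4)) / (3 * p - 1) ^+ 2 ->
  let a := (alpha + 2) / p in let k := p - 4 - 3 * alpha / 2 in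
  [/\ 0 < a, a < 1, 0 < 1 - k &
   forall w, 0 <= (k + a) + (a - 1) * w + (1 - k) * w ^+ 2].
Proof.
move=> h1 h2 hD hp hlo hhi a k.
have p0 : 0 < p by apply: lt_trans h1.
have a0 : 0 < a by rewrite /a divr_gt0.
have a1 : a < 1 by rewrite /a ltr_pdivrMr // mul1r.
set D := 6 * p ^+ 2 - 11 * p + 4 in hlo hhi.
set c0 := 6 * p ^+ 3 - 29 * p ^+ 2 + 17 * p - 2 in hlo hhi.
set s := Num.sqrt D in hlo hhi.
set m := (3 * p - 1) ^+ 2 in hlo hhi.
have m0 : 0 < m.
  rewrite /m exprn_even_gt0 //= subr_eq0; apply: contra hp => /eqP h.
  apply/eqP; move/eqP: h => h; lra.
have ss : s * s = D by rewrite /s -expr2 sqr_sqrtr.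
have s0 : 0 <= s by rewrite /s sqrtr_ge0.
rewrite ler_pdivlMr // in hhi.
rewrite ler_pdivrMr // in hlo.
have hsq : (m * alpha - c0) ^+ 2 <= 4 * p ^+ 2 * D.
  rewrite -ss.
  have e1 : m * alpha - c0 <= 2 * p * s by lra.
  have e2 : - (2 * p * s) <= m * alpha - c0 by lra.
  have : 0 <= (2 * p * s - (m * alpha - c0)) * (2 * p * s + (m * alpha - c0)).
    by apply: mulr_ge0; lra.
  nra.
have key : m * p ^+ 2 * ((a - 1) ^+ 2 - 4 * (1 - k) * (k + a))
   = (m * alpha - c0) ^+ 2 - 4 * p ^+ 2 * D.
  rewrite /m /a /k /c0 /D; field.
  by rewrite gt_eqF.
have disc : (a - 1) ^+ 2 <= 4 * (1 - k) * (k + a).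
  rewrite -subr_ge0.
  have : m * p ^+ 2 * ((a - 1) ^+ 2 - 4 * (1 - k) * (k + a)) <= 0.
    by rewrite key subr_le0.
  have mp : 0 < m * p ^+ 2 by rewrite mulr_gt0 // exprn_gt0.
  rewrite pmulr_rle0 //; lra.
have k1 : 0 < 1 - k.
  rewrite ltNge; apply/negP => hk.
  have : 0 < (a - 1) ^+ 2 by rewrite exprn_even_gt0 //= subr_eq0 lt_eqF.
  nra.
split => // w.
have : 0 <= (2 * (1 - k) * w + (a - 1)) ^+ 2 by rewrite sqr_ge0.
nra.
Qed.


Lemma phi_derive (R : realType) (r t : R) : 0 < 2 * r + (1 - r) * t ->
  is_derive t 1 (phi r) (dphi r t).
Proof.
move=> D0.
have h1 : is_derive t 1 (fun x : R => 2 * x) (2 * 1).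
  exact: (is_deriveZ 2 (is_derive_id t 1)).
have h2 : is_derive t 1 (fun x : R => 2 * r + (1 - r) * x) (0 + (1 - r) * 1).
  exact: (is_deriveD (is_derive_cst (2 * r) t 1) (is_deriveZ (1 - r) (is_derive_id t 1))).
have h3 := @is_deriveV R (fun x : R => 2 * r + (1 - r) * x) t _ 1 (lt0r_neq0 D0) h2.
have h4 := is_deriveM h1 h3.
have E : (2 * t) *: (- (2 * r + (1 - r) * t) ^- 2 *: (0 + (1 - r) * 1)) +
         (2 * r + (1 - r) * t)^-1 *: (2 * 1) = dphi r t.
  rewrite /dphi /GRing.scale /=; field.
  exact: lt0r_neq0.
rewrite -E; exact: h4.
Qed.

Lemma dphi_cont (R : realType) (r t : R) : 0 < 2 * r + (1 - r) * t ->
  {for t, continuous (dphi r)}.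
Proof.
move=> D0.
have h2 : is_derive t 1 (fun x : R => 2 * r + (1 - r) * x) (0 + (1 - r) * 1).
  exact: (is_deriveD (is_derive_cst (2 * r) t 1) (is_deriveZ (1 - r) (is_derive_id t 1))).
have h3 := is_deriveX 2 h2.
have nz : (2 * r + (1 - r) * t) ^+ 2 != 0 by rewrite expf_neq0 // lt0r_neq0.
have h4 := @is_deriveV R (fun x : R => (2 * r + (1 - r) * x) ^+ 2) t _ 1 nz h3.
have h5 := is_deriveZ (4 * r) h4.
exact: (deriv_cont h5).
Qed.

Lemma derive1_phi (R : realType) (r t : R) : 0 < 2 * r + (1 - r) * t ->
  ((phi r)^`())%classic t = dphi r t.
Proof. by move=> D0; have := phi_derive D0; move=> d; rewrite derive1E derive_val. Qed.

Lemma dphi_cont' (R : realType) (r t : R) : 0 < r <= 1 -> 0 < t ->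
  {for t, continuous ((phi r)^`())%classic}.
Proof.
move=> /andP[r0 r1] t0.
have D0 : 0 < 2 * r + (1 - r) * t by nra.
rewrite /prop_for /continuous_at derive1_phi //.
apply: cvg_trans (dphi_cont D0).
apply: near_eq_cvg; near=> y.
rewrite derive1_phi //.
have : 0 < y by near: y; exact: lt_nbhsr.
move=> y0; nra.
Unshelve. all: end_near.
Qed.

Lemma mfunAB (R : realType) (g : R -> R) (A B : R) : {in `]A, B[, continuous g} ->
  forall al be : R, A < al -> be < B -> measurable_fun `[al, be] (EFin \o g).
Proof.
move=> cg al be al0 be1.
have mg : measurable_fun (`]A, B[%classic : set R) g.
  apply: open_continuous_measurable_fun => // x; rewrite inE /= => xi; exact: cg.
apply/measurable_EFinP; apply: measurable_funS mg => //.
by move=> x /=; rewrite !in_itv /= => /andP[h1 h2]; apply/andP; split; lra.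
Qed.

Lemma phi01 (R : realType) (r x : R) : 0 < r <= 1 -> 0 < x -> x * (1 + r) < 2 * r ->
  0 < phi r x < 1.
Proof.
move=> /andP[r0 r1] x0 xr.
have D0 : 0 < 2 * r + (1 - r) * x by nra.
rewrite /phi; apply/andP; split.
  by rewrite divr_gt0 // mulr_gt0.
by rewrite ltr_pdivrMr // mul1r; nra.
Qed.

Lemma step (R : realType) (a k r al be : R) : 0 < a < 1 ->
  (forall w, 0 < w < 1 -> 0 <= (k + a) + (a - 1) * w + (1 + a - (k + a)) * w ^+ 2) ->
  0 < r <= 1 -> 0 < al -> al < be -> be * (1 + r) < 2 * r ->
  (\int[lebesgue_measure]_(x in `[al, be]) (r `^ k * fa a x)%:E
    <= \int[lebesgue_measure]_(x in `]0%R, 1%R[) (fa a x)%:E)%E.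
Proof.
move=> aa hq rr al0 albe ber.
have /andP[r0 r1] := rr.
have /andP[a0 a1] := aa.
pose X := 2 * r / (1 + r).
have inX x : 0 < x -> x * (1 + r) < 2 * r -> 0 < x < X.
  move=> x0 xr; rewrite /X ltr_pdivlMr; last lra.
  by rewrite x0.
have inX' x : 0 < x < X -> x * (1 + r) < 2 * r.
  by move=> /andP[_]; rewrite /X ltr_pdivlMr //; lra.
have X1 : X <= 1 by rewrite /X ler_pdivrMr; lra.
have memab x : x \in `[al, be] -> 0 < x /\ x * (1 + r) < 2 * r.
  rewrite in_itv /= => /andP[h1 h2]; split; nra.
have cpb : {in `]0, X[, continuous (fun x => fa a (phi r x) * dphi r x)}.
  move=> x; rewrite in_itv /= => xX.
  have x0 : 0 < x by case/andP: xX.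
  have xr := inX' x xX.
  have D0 : 0 < 2 * r + (1 - r) * x by nra.
  have H1 : {for x, continuous (fa a \o phi r)}.
    apply: continuous_comp; first exact: (deriv_cont (phi_derive D0)).
    by apply: fa_cont; rewrite in_itv /=; apply: phi01.
  exact: (continuousM H1 (dphi_cont D0)).
have cfk : {in `]0, X[, continuous (fun x => r `^ k * fa a x)}.
  move=> x; rewrite in_itv /= => /andP[x0 xX].
  have H2 : {for x, continuous (fa a)}.
    apply: fa_cont; rewrite in_itv /=; apply/andP; split => //; lra.
  exact: (continuousM (cvg_cst _) H2).
apply: (@le_trans _ _ (\int[lebesgue_measure]_(x in `[al, be]) (fa a (phi r x) * dphi r x)%:E)%E).
  apply: ge0_le_integral => //.
  - move=> x /memab [x0 xr]; rewrite lee_fin mulr_ge0 ?powR_ge0 // ltW // fa_gt0 //.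
    apply/andP; split => //; nra.
  - apply: (mfunAB cfk) => //.
    by rewrite /X ltr_pdivlMr; lra.
  - apply: (mfunAB cpb) => //.
    by rewrite /X ltr_pdivlMr; lra.
  - move=> x /memab [x0 xr]; rewrite lee_fin.
    by apply: pointwise.
have hom : {in `[al, be] &, {homo phi r : x y / x < y}}.
  move=> x y /memab [x0 xr] /memab [y0 yr] xy.
  have Dx : 0 < 2 * r + (1 - r) * x by nra.
  have Dy : 0 < 2 * r + (1 - r) * y by nra.
  rewrite /phi ltr_pdivrMr // mulrAC ltr_pdivlMr //; nra.
have pos x : x \in `[al, be] -> 0 < 2 * r + (1 - r) * x.
  by move=> /memab [x0 xr]; nra.
have alX : 0 < al /\ al * (1 + r) < 2 * r by split => //; nra.
have beX : 0 < be /\ be * (1 + r) < 2 * r by split => //; lra.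
have cF' : {in `]al, be[, continuous ((phi r)^`())%classic}.
  move=> x; rewrite in_itv /= => /andP[h1 h2].
  by apply: dphi_cont' => //; lra.
have cva : cvg (((phi r)^`())%classic x @[x --> al^'+]).
  by apply/cvg_ex; eexists; apply: cvg_at_right_filter; exact: dphi_cont'.
have cvb : cvg (((phi r)^`())%classic x @[x --> be^'-]).
  by apply/cvg_ex; eexists; apply: cvg_at_left_filter; apply: dphi_cont'; lra.
have dLR : derivable_oo_LRcontinuous (phi r) al be.
  split.
  - move=> x; rewrite in_itv /= => /andP[h1 h2].
    by case: (phi_derive (pos x _)) => //; rewrite in_itv /= ltW // ltW.
  - apply: cvg_at_right_filter.
    by apply: (deriv_cont (phi_derive (pos al _))); rewrite in_itv /= lexx ltW.
  - apply: cvg_at_left_filter.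
    by apply: (deriv_cont (phi_derive (pos be _))); rewrite in_itv /= lexx ltW.
have /andP[pa0 pa1] := phi01 rr (proj1 alX) (proj2 alX).
have pb := phi01 rr (proj1 beX) (proj2 beX).
have cG : {within `[phi r al, phi r be], continuous (fa a)}.
  apply: derivable_within_continuous => x; rewrite in_itv /= => /andP[h1 h2].
  have [df d] := fa_derivable a (introT andP (conj (lt_le_trans pa0 h1) (le_lt_trans h2 (proj2 (andP pb))))).
  by case: d.
have sub := integration_by_substitution_increasing (ltW albe) hom cF' cva cvb dLR cG.
rewrite (_ : \int[lebesgue_measure]_(x in `[al, be]) _ =
   \int[lebesgue_measure]_(x in `[al, be]) (((fa a \o phi r) * ((phi r)^`())%classic) x)%:E)%E; last first.
  apply: eq_integral => x; rewrite inE /= => xi.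
  have -> : (((fa a \o phi r) * ((phi r)^`())%classic) x) =
    fa a (phi r x) * ((phi r)^`())%classic x by [].
  by rewrite derive1_phi // pos.
rewrite -sub.
apply: ge0_subset_integral => //.
- apply/measurable_EFinP; apply: open_continuous_measurable_fun => // x.
  by rewrite inE /= => xi; apply: fa_cont.
- move=> x /=; rewrite in_itv /= => /andP[h1 h2].
  by rewrite lee_fin ltW // fa_gt0 //; apply/andP.
- move=> x /=; rewrite !in_itv /= => /andP[h1 h2].
  apply/andP; split; [exact: lt_le_trans pa0 h1 | exact: le_lt_trans h2 (proj2 (andP pb))].
Qed.

Lemma main_ineq (R : realType) (a k r : R) : 0 < a < 1 ->
  (forall w, 0 < w < 1 -> 0 <= (k + a) + (a - 1) * w + (1 + a - (k + a)) * w ^+ 2) ->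
  0 < r <= 1 ->
  r `^ k * fine (\int[lebesgue_measure]_(x in `]0%R, (2 * r / (1 + r))%R[) (fa a x)%:E)%E
  - fine (\int[lebesgue_measure]_(x in `]0%R, 1%R[) (fa a x)%:E)%E <= 0.
Proof.
move=> aa hq rr.
have /andP[r0 r1] := rr.
have /andP[a0 a1] := aa.
set X := 2 * r / (1 + r).
have X0 : 0 < X by rewrite /X divr_gt0 //; lra.
have X1 : X <= 1 by rewrite /X ler_pdivrMr; lra.
set E1 := (\int[lebesgue_measure]_(x in `]0%R, 1%R[) (fa a x)%:E)%E.
set EX := (\int[lebesgue_measure]_(x in `]0%R, X[) (fa a x)%:E)%E.
have mfa : measurable_fun (`]0, 1[%classic : set R) (EFin \o fa a).
  apply/measurable_EFinP; apply: open_continuous_measurable_fun => // x.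
  by rewrite inE /= => xi; apply: fa_cont.
have E10 : (0 <= E1)%E.
  apply: integral_ge0 => x; rewrite /= in_itv /= => xi.
  by rewrite lee_fin ltW // fa_gt0.
have E1f : E1 \is a fin_num.
  rewrite ge0_fin_numE //; apply: le_lt_trans (fa_fin aa) _; exact: ltry.
have subX : (`]0, X[%classic : set R) `<=` `]0, 1[%classic.
  move=> x /=; rewrite !in_itv /= => /andP[h1 h2]; apply/andP; split => //; lra.
have EXle : (EX <= E1)%E.
  apply: ge0_subset_integral => //.
  by move=> x /=; rewrite in_itv /= => xi; rewrite lee_fin ltW // fa_gt0.
have EX0 : (0 <= EX)%E.
  apply: integral_ge0 => x; rewrite /= in_itv /= => /andP[h1 h2].
  by rewrite lee_fin ltW // fa_gt0 //; apply/andP; split => //; lra.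
have EXf : EX \is a fin_num.
  rewrite ge0_fin_numE //; apply: le_lt_trans EXle _; rewrite -ge0_fin_numE //.
have cfk : {in `]0, X[, continuous (fun x => r `^ k * fa a x)}.
  move=> x; rewrite in_itv /= => /andP[x0 xX].
  have H2 : {for x, continuous (fa a)}.
    apply: fa_cont; rewrite in_itv /=; apply/andP; split => //; lra.
  exact: (continuousM (cvg_cst _) H2).
have B : (\int[lebesgue_measure]_(x in `]0%R, X[) ((r `^ k)%:E * (fa a x)%:E) <= E1)%E.
  under eq_integral do rewrite -EFinM.
  apply: bound_oo => //.
  - move=> x /andP[x0 xX]; rewrite mulr_ge0 ?powR_ge0 // ltW // fa_gt0 //.
    by apply/andP; split => //; lra.
  - move=> al be al0 albe beX.
    apply: step => //.
    by move: beX; rewrite /X ltr_pdivlMr //; lra.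
rewrite ge0_integralZl_EFin in B; last 3 first.
all: try exact: powR_ge0.
all: try (move=> x /=; rewrite in_itv /= => /andP[h1 h2];
  rewrite lee_fin ltW // fa_gt0 //; apply/andP; split => //; lra).
all: try (apply: measurable_funS mfa => //).
rewrite subr_le0 -lee_fin.
rewrite fineK // EFinM fineK //.
exact: measurable_itv.
Qed.


Unset Implicit Arguments.
Local Close Scope classical_set_scope.

Theorem lemma2p3 (R : realType) (p alpha : R) :
  alpha + 2 < p -> 0 < alpha + 2 ->
  0 <= 6 * p ^+ 2 - 11 * p + 4 ->
  p != 3^-1 ->
  (6 * p ^+ 3 - 29 * p ^+ 2 + 17 * p - 2
     - 2 * p * Num.sqrt (6 * p ^+ 2 - 11 * p + 4)) / (3 * p - 1) ^+ 2 <= alpha ->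
  alpha <= (6 * p ^+ 3 - 29 * p ^+ 2 + 17 * p - 2
     + 2 * p * Num.sqrt (6 * p ^+ 2 - 11 * p + 4)) / (3 * p - 1) ^+ 2 ->
  forall r : R, 0 < r <= 1 -> F p alpha r <= 0.
Proof.
move=> h1 h2 hD hp hlo hhi r rr.
have := alg_part h1 h2 hD hp hlo hhi.
rewrite /= => -[a0 a1 k1 hq].
have aa : 0 < (alpha + 2) / p < 1 by apply/andP; split.
have hq' : forall w, 0 < w < 1 ->
    0 <= ((p - 4 - 3 * alpha / 2) + (alpha + 2) / p)
         + ((alpha + 2) / p - 1) * w
         + (1 + (alpha + 2) / p - ((p - 4 - 3 * alpha / 2) + (alpha + 2) / p)) * w ^+ 2.
  move=> w _.
  have -> : 1 + (alpha + 2) / p - ((p - 4 - 3 * alpha / 2) + (alpha + 2) / p)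
    = 1 - (p - 4 - 3 * alpha / 2) by ring.
  exact: hq.
exact: (main_ineq aa hq' rr).
Qed.
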